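(* Let $\mathbf{P}=\{p_n(x)\}_{n\ge0}$ be a sequence of complex polynomials with $\deg p_n=n$, $p_0=1$, and let $\bar{\mathbf{P}}=\{\bar p_n(x)\}$ with $\bar p_0(x)=1$, $\bar p_n(x)=xp_{n-1}(x)$ for $n\ge1$. Then for all $n\ge0$, $$A_{n+1}(x;\bar{\mathbf{P}})=(1+nx)A_n(x;\mathbf{P})+x(1-x)A_n'(x;\mathbf{P}),$$ where $'$ denotes the derivative in $x$.
   Context: For any sequence $\mathbf{Q}=\{q_n\}$ with $\deg q_n=n$, $q_0=1$, the Eulerian numbers $A_{n,k}(\mathbf{Q})$ ($0\le k\le n$) are the unique coefficients with $q_n(x)=\sum_{k=0}^{n}A_{n,k}(\mathbf{Q})\binom{x+n-k-1}{n}$, where $\binom{y}{n}=y(y-1)\cdots(y-n+1)/n!$, and $A_n(x;\mathbf{Q})=\sum_{k=0}^n A_{n,k}(\mathbf{Q})x^k$. *)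

(* Defs.v *)
From HB Require Import structures.
From mathcomp Require Import all_boot all_order all_algebra.
From Stdlib Require Import ClassicalEpsilon.
Set Implicit Arguments. Unset Strict Implicit. Unset Printing Implicit Defensive.
Import Order.TTheory GRing.Theory Num.Theory.
Local Open Scope ring_scope.

(* Coefficient field: any numClosedFieldType C (the complex numbers are one). *)

(* binpoly n k = binom(x + n - k - 1, n) as a polynomial in x, where
   binom(y, n) = y (y-1) ... (y-n+1) / n!. The shift n-k-1 is an integer
   (it is -1 when k = n). *)
Definition binpoly (C : numClosedFieldType) (n k : nat) : {poly C} :=
  (n`!%:R)^-1 *:
    \prod_(i < n) ('X + (((Posz n - Posz k - 1) - Posz i)%:~R)%:P).

Definition eulerian_spec (C : numClosedFieldType) (q : {poly C}) (n : nat)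
    (a : nat -> C) : Prop :=
  q = \sum_(k < n.+1) a k *: binpoly C n k.

Definition eulerian_num (C : numClosedFieldType) (Q : nat -> {poly C})
    (n : nat) : nat -> C :=
  epsilon (inhabits (fun _ => 0)) (eulerian_spec (Q n) n).

Definition eulerian_poly (C : numClosedFieldType) (Q : nat -> {poly C})
    (n : nat) : {poly C} :=
  \sum_(k < n.+1) eulerian_num Q n k *: 'X^k.

Definition bar_seq (C : numClosedFieldType) (P : nat -> {poly C}) :
    nat -> {poly C} :=
  fun n => if n is m.+1 then 'X * P m else 1.

(* Main.v *)
Require Import Defs.
From HB Require Import structures.
From mathcomp Require Import all_boot all_order all_algebra.
From mathcomp Require Import zify ring.
From Stdlib Require Import ClassicalEpsilon.
Import Order.TTheory GRing.Theory Num.Theory.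
Local Open Scope ring_scope.

Lemma hornerB (C : numClosedFieldType) n k x : (binpoly C n k).[x] =
  (n`!%:R)^-1 * \prod_(i < n) (x + ((Posz n - Posz k - 1) - Posz i)%:~R).
Proof.
rewrite /binpoly hornerZ horner_prod; congr (_ * _).
by apply: eq_bigr => i _; rewrite hornerD hornerX hornerC.
Qed.

Lemma fact_neq0 (C : numClosedFieldType) n : (n`!%:R : C) != 0.
Proof. by rewrite pnatr_eq0 -lt0n fact_gt0. Qed.

Lemma binpoly_low (C : numClosedFieldType) n k j : (j < k)%N -> (k <= n)%N ->
  (binpoly C n k).[j.+1%:R] = 0.
Proof.
move=> jk kn; rewrite hornerB.
have hi : (j + n - k < n)%N by lia.
rewrite (bigD1 (Ordinal hi)) //=.
have e : (Posz j.+1 + (Posz n - Posz k - 1 - Posz (j + n - k))) = 0 by lia.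
have := congr1 (fun z : int => z%:~R : C) e; rewrite intrD /= => ->.
by rewrite mul0r mulr0.
Qed.

Lemma binpoly_diag (C : numClosedFieldType) n k : (k <= n)%N ->
  (binpoly C n k).[k.+1%:R] = 1.
Proof.
move=> kn; rewrite hornerB.
rewrite (eq_bigr (fun i : 'I_n => ((n - i)%N)%:R)); last first.
  move=> i _.
  have e : (Posz k.+1 + (Posz n - Posz k - 1 - Posz i)) = Posz (n - i).
    by have := ltn_ord i; lia.
  by have := congr1 (fun z : int => z%:~R : C) e; rewrite intrD /=.
by rewrite -natr_prod -ffact_prod ffactnn mulVf // fact_neq0.
Qed.

Lemma size_binpoly (C : numClosedFieldType) n k : (size (binpoly C n k) <= n.+1)%N.
Proof.
rewrite /binpoly (leq_trans (size_scale_leq _ _)) // size_prod; last first.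
  by move=> i _; rewrite -size_poly_eq0 size_XaddC.
rewrite (eq_bigr (fun _ => 2%N)); last by move=> i _; rewrite size_XaddC.
rewrite sum_nat_const cardE size_enum_ord; lia.
Qed.

Lemma tri_exists (C : pzRingType) (N : nat) (f : nat -> nat -> C) (w : nat -> C) :
  (forall k, (k <= N)%N -> f k k = 1) ->
  (forall j k, (j < k)%N -> (k <= N)%N -> f j k = 0) ->
  forall n, (n <= N)%N -> exists a : nat -> C,
    forall j, (j <= n)%N -> \sum_(k < n.+1) a k * f j k = w j.
Proof.
move=> hd ht; elim=> [|n IH] hn.
  exists (fun _ => w 0%N) => j; rewrite leqn0 => /eqP ->.
  by rewrite big_ord1 hd // mulr1.
have [a ha] := IH (ltnW hn).
exists (fun k => if k == n.+1 then w n.+1 - \sum_(i < n.+1) a i * f n.+1 i else a k).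
move=> j hj; rewrite big_ord_recr /= eqxx.
rewrite (eq_bigr (fun i : 'I_n.+1 => a i * f j i)); last first.
  by move=> i _; rewrite (ltn_eqF (ltn_ord i)).
rewrite leq_eqVlt in hj; case/orP: hj => [/eqP ->|hj].
  by rewrite hd // mulr1 addrC subrK.
by rewrite ht // mulr0 addr0 ha.
Qed.

Lemma tri_unique (C : pzRingType) n (f : nat -> nat -> C) (a : nat -> C) :
  (forall k, (k <= n)%N -> f k k = 1) ->
  (forall j k, (j < k)%N -> (k <= n)%N -> f j k = 0) ->
  (forall j, (j <= n)%N -> \sum_(k < n.+1) a k * f j k = 0) ->
  forall k, (k <= n)%N -> a k = 0.
Proof.
move=> hd ht hs.
suff H : forall m, (m <= n.+1)%N -> forall k, (k < m)%N -> a k = 0.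
  by move=> k kn; apply: (H n.+1).
elim=> [|m IH] hm k hk; first by [].
have IH' := IH (ltnW hm).
rewrite ltnS leq_eqVlt in hk; case/orP: hk => [/eqP ->|]; last exact: IH'.
have := hs m hm.
rewrite (bigD1 (Ordinal hm)) //= hd // mulr1 big1 ?addr0 //.
move=> i /negbTE ne; case: (ltngtP i m) => h.
- by rewrite IH' // mul0r.
- by rewrite ht ?mulr0 // -ltnS.
- by move: ne; rewrite -val_eqE /= h eqxx.
Qed.

Lemma poly_eq0_pts (C : numClosedFieldType) n (p : {poly C}) :
  (size p <= n.+1)%N -> (forall j, (j <= n)%N -> p.[j.+1%:R] = 0) -> p = 0.
Proof.
move=> hs hr; apply/eqP; apply/negPn/negP => hp.
have := @max_poly_roots C p (mkseq (fun j => (j.+1)%:R : C) n.+1) hp.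
rewrite size_mkseq.
have -> : all (root p) (mkseq (fun j => (j.+1)%:R : C) n.+1).
  apply/allP => x /mapP [j]; rewrite mem_iota add0n => /andP[_ hj] ->.
  by apply/eqP/hr; rewrite -ltnS.
have -> : uniq (mkseq (fun j => (j.+1)%:R : C) n.+1).
  rewrite map_inj_uniq ?iota_uniq // => a b /eqP; rewrite eqr_nat eqSS.
  by move/eqP.
by move=> /(_ isT isT); rewrite ltnNge hs.
Qed.
Definition Bf (C : numClosedFieldType) N (j k : nat) : C := (binpoly C N k).[j.+1%:R].

Lemma Bf_diag (C : numClosedFieldType) N k : (k <= N)%N -> Bf C N k k = 1.
Proof. exact: binpoly_diag. Qed.

Lemma Bf_tri (C : numClosedFieldType) N j k : (j < k)%N -> (k <= N)%N -> Bf C N j k = 0.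
Proof. exact: binpoly_low. Qed.

Lemma rep_exists (C : numClosedFieldType) n (q : {poly C}) :
  (size q <= n.+1)%N -> exists a, eulerian_spec q n a.
Proof.
move=> hs.
have [a ha] := @tri_exists C n _ (fun j => q.[j.+1%:R]) (@Bf_diag C n) (@Bf_tri C n) n (leqnn n).
exists a; rewrite /eulerian_spec; apply/eqP; rewrite -subr_eq0; apply/eqP.
apply: (@poly_eq0_pts C n).
  rewrite (leq_trans (size_polyD _ _)) // geq_max hs size_polyN.
  apply: (leq_trans (size_sum _ _ _)); apply/bigmax_leqP => i _.
  exact: (leq_trans (size_scale_leq _ _) (size_binpoly _ _ _)).
move=> j hj; rewrite hornerD hornerN horner_sum -(ha j hj).
apply/eqP; rewrite subr_eq0; apply/eqP; apply: eq_bigr => i _.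
by rewrite hornerZ.
Qed.

Lemma rep_unique (C : numClosedFieldType) n q (a b : nat -> C) :
  eulerian_spec q n a -> eulerian_spec q n b -> forall k, (k <= n)%N -> a k = b k.
Proof.
rewrite /eulerian_spec => ha hb k hk; apply/eqP; rewrite -subr_eq0; apply/eqP.
move: k hk; apply: (@tri_unique C n (Bf C n) (fun k => a k - b k)).
- exact: Bf_diag.
- exact: Bf_tri.
move=> j hj.
have : (q - q).[j.+1%:R] = 0 by rewrite subrr horner0.
rewrite {1}ha hb -sumrB horner_sum => e; apply: (etrans _ e); apply: eq_bigr => i _.
by rewrite -scalerBl hornerZ.
Qed.

Lemma binpoly_X (C : numClosedFieldType) n k : (k <= n)%N ->
  'X * binpoly C n k = (k.+1)%:R *: binpoly C n.+1 k + (n - k)%N%:R *: binpoly C n.+1 k.+1.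
Proof.
move=> kn.
set Pi := \prod_(i < n) ('X + (((Posz n - Posz k - 1) - Posz i)%:~R)%:P : {poly C}).
have h1 : \prod_(i < n.+1) ('X + (((Posz n.+1 - Posz k - 1) - Posz i)%:~R)%:P : {poly C})
   = ('X + ((n - k)%N%:R)%:P) * Pi.
  rewrite big_ord_recl; congr (_ * _).
    have e : ((Posz n.+1 - Posz k - 1) - Posz (@ord0 n)) = Posz (n - k) by simpl; lia.
    by rewrite e.
  apply: eq_bigr => i _.
  have e : ((Posz n.+1 - Posz k - 1) - Posz (lift ord0 i)) = ((Posz n - Posz k - 1) - Posz i).
    by rewrite /= /bump /=; lia.
  by rewrite e.
have h2 : \prod_(i < n.+1) ('X + (((Posz n.+1 - Posz k.+1 - 1) - Posz i)%:~R)%:P : {poly C})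
   = Pi * ('X - ((k.+1)%:R)%:P).
  rewrite big_ord_recr; congr (_ * _).
    apply: eq_bigr => i _.
    have e : ((Posz n.+1 - Posz k.+1 - 1) - Posz (widen_ord (leqnSn n) i)) = ((Posz n - Posz k - 1) - Posz i).
      by rewrite /=; lia.
    by rewrite e.
  have e : ((Posz n.+1 - Posz k.+1 - 1) - Posz (@ord_max n)) = - Posz k.+1 by simpl; lia.
  by rewrite e mulrNz polyCN.
rewrite /binpoly h1 h2 -/Pi factS natrM invfM.
set r := (n`!%:R : C)^-1; set s := (n.+1%:R : C)^-1.
have hr : r = n.+1%:R * (s * r) by rewrite mulrA mulfV ?mul1r // pnatr_eq0.
rewrite {1}hr natrB // -!mul_polyC !polyCM !polyCB !polyC_natr.
ring.
Qed.
Definition bcoef {C : numClosedFieldType} n (a : nat -> C) (j : nat) : C :=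
  (if (j < n.+1)%N then (j.+1)%:R * a j else 0)
  + (if j is j'.+1 then (n - j')%N%:R * a j' else 0).

Lemma split_sum (C : numClosedFieldType) (V : lmodType C) n (a : nat -> C) (F : nat -> V) :
  \sum_(j < n.+2) bcoef n a j *: F j =
  \sum_(k < n.+1) ((k.+1)%:R * a k) *: F k + \sum_(k < n.+1) ((n - k)%N%:R * a k) *: F k.+1.
Proof.
rewrite /bcoef; under eq_bigr do rewrite scalerDl.
rewrite big_split /=; congr (_ + _).
  rewrite big_ord_recr /= ltnn scale0r addr0; apply: eq_bigr => i _.
  by rewrite ltn_ord.
by rewrite big_ord_recl /= scale0r add0r.
Qed.

Theorem theorem3p3 (C : numClosedFieldType) (P : nat -> {poly C})
  (hdeg : forall n : nat, size (P n) = n.+1) (h0 : P 0%N = 1) (n : nat) :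
  eulerian_poly (bar_seq P) n.+1 =
    (1 + n%:R *: 'X) * eulerian_poly P n
    + ('X * (1 - 'X)) * (eulerian_poly P n)^`().
Proof.
rewrite /eulerian_poly.
set a := eulerian_num P n.
have ha : eulerian_spec (P n) n a.
  by apply: epsilon_spec; apply: rep_exists; rewrite hdeg.
have hb : eulerian_spec (bar_seq P n.+1) n.+1 (bcoef n a).
  rewrite /eulerian_spec /= split_sum {1}ha mulr_sumr.
  rewrite -big_split /=; apply: eq_bigr => i _.
  rewrite -scalerAr binpoly_X ?(ltnSE (ltn_ord i)) // scalerDr !scalerA.
  by rewrite (mulrC (a i)) (mulrC (a i)).
have he : eulerian_spec (bar_seq P n.+1) n.+1 (eulerian_num (bar_seq P) n.+1).
  by apply: epsilon_spec; exists (bcoef n a).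
have hu := @rep_unique C n.+1 _ _ _ he hb.
rewrite (eq_bigr (fun k : 'I_n.+2 => bcoef n a k *: 'X^k)); last first.
  by move=> i _; rewrite hu // -ltnS.
rewrite split_sum raddf_sum !mulr_sumr -!big_split /=; apply: eq_bigr => i _.
rewrite linearZ /= derivXn natrB ?(ltnSE (ltn_ord i)) //.
have hX : 'X * ('X^(i.-1) *+ i) = 'X^i *+ i :> {poly C}.
  by case: (nat_of_ord i) => [|m] /=; rewrite ?mulr0n ?mulr0 // mulrnAr exprS.
rewrite -!mul_polyC !polyCM !polyC_natr polyCB !polyC_natr exprSr.
have -> : 'X * (1 - 'X) * ((a i)%:P * ('X^(i.-1) *+ i))
    = (1 - 'X) * (a i)%:P * ('X^i *+ i) by rewrite -hX; ring.
rewrite -mulr_natr; ring.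
Qed.
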